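(* Let $S\subseteq\mathbb{R}^d$ be a finite set, and suppose every pair $\{p_1,p_2\}$ of distinct points of $S$ is coloured red or blue in such a way that the distance between the points of any blue pair is strictly more than $3$ times the distance between the points of any red pair. Let $B$ be a largest blue clique in $S$ (a subset all of whose pairs are blue). Then $S$ can be partitioned into $|B|$ vertex-disjoint red cliques $R_1,\dots,R_{|B|}$ (subsets all of whose pairs are red) such that (1) each $R_i$ shares exactly one point with $B$, and (2) if $p\in R_i$, $q\in R_j$ with $i\ne j$, then $\{p,q\}$ is blue. *)

(* Defs.v *)
From mathcomp Require Import all_boot all_order all_algebra.
Set Implicit Arguments. Unset Strict Implicit. Unset Printing Implicit Defensive.
Import Order.TTheory GRing.Theory Num.Theory.
Local Open Scope ring_scope.

Definition edist (R : rcfType) (d : nat) (p q : 'rV[R]_d) : R :=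
  Num.sqrt (\sum_(i < d) (p 0 i - q 0 i) ^+ 2).

(* A colouring of pairs of points of T: col x y = true means the pair {x,y}
   is blue, false means red.  Cliques are subsets all of whose pairs of
   distinct elements have the given colour. *)
Definition blue_clique (T : finType) (col : T -> T -> bool) (A : {set T}) :=
  forall x y, x \in A -> y \in A -> x != y -> col x y.

Definition red_clique (T : finType) (col : T -> T -> bool) (A : {set T}) :=
  forall x y, x \in A -> y \in A -> x != y -> ~~ col x y.

Definition largest_blue_clique (T : finType) (col : T -> T -> bool) (B : {set T}) :=
  blue_clique col B /\ forall A : {set T}, blue_clique col A -> (#|A| <= #|B|)%N.

(* Main.v *)
Require Import Defs.
From mathcomp Require Import all_boot all_order all_algebra.
From mathcomp Require Import ring lra.
Set Implicit Arguments. Unset Strict Implicit.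
Import Order.TTheory GRing.Theory Num.Theory.
Local Open Scope ring_scope.

Definition sqd (R : rcfType) (d : nat) (p q : 'rV[R]_d) : R :=
  \sum_(i < d) (p 0 i - q 0 i) ^+ 2.

Lemma sqd_ge0 (R : rcfType) (d : nat) (p q : 'rV[R]_d) : 0 <= sqd p q.
Proof. by apply: sumr_ge0 => i _; rewrite sqr_ge0. Qed.

Lemma sqd_tri (R : rcfType) (d : nat) (x y z : 'rV[R]_d) :
  sqd x z <= 2 * sqd x y + 2 * sqd y z.
Proof.
rewrite /sqd !mulr_sumr -big_split /=; apply: ler_sum => i _.
have -> : x 0 i - z 0 i = (x 0 i - y 0 i) + (y 0 i - z 0 i) by ring.
set u := x 0 i - y 0 i; set w := y 0 i - z 0 i.
have : 0 <= (u - w) ^+ 2 by rewrite sqr_ge0.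
rewrite !expr2 => h; nra.
Qed.

Lemma edist_sq (R : rcfType) (d : nat) (p q : 'rV[R]_d) :
  edist p q ^+ 2 = sqd p q /\ 0 <= edist p q.
Proof. by split; [rewrite sqr_sqrtr // sqd_ge0 | rewrite sqrtr_ge0]. Qed.

Theorem lemma1 (R : rcfType) (d : nat) (T : finType) (pos : T -> 'rV[R]_d)
  (pos_inj : injective pos) (col : T -> T -> bool)
  (col_sym : forall x y, x != y -> col x y = col y x)
  (col_sep : forall p1 p2 q1 q2, p1 != p2 -> q1 != q2 ->
      col p1 p2 -> ~~ col q1 q2 ->
      3%:R * edist (pos q1) (pos q2) < edist (pos p1) (pos p2))
  (B : {set T}) (hB : largest_blue_clique col B) :
  exists P : 'I_#|B| -> {set T},
    [/\ (forall i j, i != j -> [disjoint P i & P j]),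
        (forall x, exists i, x \in P i),
        (forall i, red_clique col (P i)),
        (forall i, #|P i :&: B| = 1%N) &
        (forall i j p q, i != j -> p \in P i -> q \in P j -> col p q)].
Proof.
case: hB => Bbl Bmax.
pose E x y := (x == y) || ~~ col x y.
have Erefl : forall x, E x x by move=> x; rewrite /E eqxx.
have Esym : forall x y, E x y -> E y x.
  move=> x y; rewrite /E; case: eqP => [->|/eqP nxy] /=; first by rewrite eqxx.
  by rewrite col_sym // eq_sym (negbTE nxy).
have Etr : forall x y z, E x y -> E y z -> E x z.
  move=> x y z; rewrite /E.
  case: (eqVneq x y) => [->|nxy] //= cxy.
  case: (eqVneq y z) => [<-|nyz] /=; first by rewrite cxy orbT.
  move=> cyz; case: (eqVneq x z) => [//|nxz] /=.
  apply/negP => cxz.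
  have h1 := col_sep _ _ _ _ nxz nxy cxz cxy.
  have h2 := col_sep _ _ _ _ nxz nyz cxz cyz.
  have t := sqd_tri (pos x) (pos y) (pos z).
  move: (edist_sq (pos x) (pos y)) (edist_sq (pos y) (pos z))
        (edist_sq (pos x) (pos z)) => [e1 p1] [e2 p2] [e3 p3].
  move: h1 h2 t; rewrite -e1 -e2 -e3.
  set a := edist _ _ in e1 p1 *; set b := edist _ _ in e2 p2 *;
  set c := edist _ _ in e3 p3 *.
  rewrite !expr2 => h1 h2 t.
  have q1 : (3 * a) * (3 * a) < c * c by nra.
  have q2 : (3 * b) * (3 * b) < c * c by nra.
  nra.
have EB : forall x y, x \in B -> y \in B -> E x y -> x = y.
  move=> x y xB yB; rewrite /E; case: eqVneq => [//|nxy] /=.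
  by rewrite (Bbl _ _ xB yB nxy).
pose P (i : 'I_#|B|) := [set x | E (enum_val (A := B) i) x].
have eP : forall i : 'I_#|B|, enum_val (A := B) i \in B by move=> i; apply: enum_valP.
exists P; split.
- move=> i j nij; apply/pred0P => x /=; rewrite !inE.
  apply/negP => /andP [hi hj]; move/negP: nij; apply; apply/eqP.
  apply: enum_val_inj; apply: EB => //; exact: Etr hi (Esym _ _ hj).
- move=> x; case: (boolP [exists b in B, E b x]).
    case/exists_inP => b bB hb.
    exists (enum_rank_in bB b); by rewrite inE enum_rankK_in.
  move/exists_inPn => nB.
  have xnB : x \notin B by apply/negP => xB; move: (nB x xB); rewrite Erefl.
  have : blue_clique col (x |: B).
    move=> u v; rewrite !inE => /orP [/eqP->|uB] /orP [/eqP->|vB] nuv.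
    + by rewrite eqxx in nuv.
    + have := nB v vB; rewrite /E negb_or negbK => /andP [_ h].
      by rewrite col_sym // eq_sym.
    + by have := nB u uB; rewrite /E negb_or negbK => /andP [_ h].
    + exact: Bbl.
  move/Bmax; rewrite cardsU1 xnB /=; by rewrite ltnn.
- move=> i x y; rewrite !inE => hx hy nxy.
  have := Etr _ _ _ (Esym _ _ hx) hy; by rewrite /E (negbTE nxy).
- move=> i; have -> : P i :&: B = [set enum_val i].
    apply/setP => y; rewrite !inE; apply/andP/eqP.
      by case=> hy yB; apply/esym/EB.
    by move=> ->; rewrite Erefl.
  by rewrite cards1.
- move=> i j p q nij hp hq; rewrite inE in hp; rewrite inE in hq.
  apply/negPn/negP => ncol.
  have : E p q by rewrite /E ncol orbT.
  move=> hpq; move/negP: nij; apply; apply/eqP; apply: enum_val_inj.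
  apply: EB => //; exact: Etr hp (Etr _ _ _ hpq (Esym _ _ hq)).
Qed.
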